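(* Write $\chi_n^*(M_{1,2}(F))=\sum m_{\langle\lambda\rangle}\chi_{\langle\lambda\rangle}$, the sum over multipartitions $\langle\lambda\rangle=(\lambda(1),\lambda(2),\lambda(3),\lambda(4))\vdash n$ with $h(\lambda(1))\le2$, $h(\lambda(2))\le3$, $h(\lambda(3))\le2$, $h(\lambda(4))\le2$. If $\langle\lambda\rangle=(\lambda(1),\emptyset,\lambda(3),\lambda(4))$ with $\lambda(3)=(w_1+w_2,w_2)\neq\emptyset$, $\lambda(4)=(\rho_1+\rho_2,\rho_2)\neq\emptyset$ ($w_i,\rho_i\ge0$ integers) and $|w_1-\rho_1|\le2$, then $m_{\langle\lambda\rangle}\neq0$.
   Context: $F$ is a field of characteristic zero. $M_{1,2}(F)$ is $M_3(F)$ with $\mathbb{Z}_2$-grading with even part spanned by $e_{11},e_{22},e_{23},e_{32},e_{33}$, odd part by $e_{12},e_{13},e_{21},e_{31}$, and orthosymplectic superinvolution $*$ sending the matrix with rows $(a,b,c),(d,e,f),(g,h,i)$ to the matrix with rows $(a,-g,d),(c,i,-f),(-b,-h,e)$. Its even symmetric, even skew, odd symmetric, odd skew parts are $\mathrm{span}\{e_{11},e_{22}+e_{33}\}$, $\mathrm{span}\{e_{22}-e_{33},e_{23},e_{32}\}$, $\mathrm{span}\{e_{12}-e_{31},e_{13}+e_{21}\}$, $\mathrm{span}\{e_{12}+e_{31},e_{13}-e_{21}\}$. In the free $*$-superalgebra on variables $y_i^+,y_i^-,z_i^+,z_i^-$ (even symmetric, even skew, odd symmetric, odd skew), a $*$-identity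 is a polynomial vanishing under all substitutions of the variables by elements of the corresponding parts; $Id_2^*$ denotes the set of them. $P_n^*$ is the span of the monomials $w_{\sigma(1)}\cdots w_{\sigma(n)}$, $\sigma\in S_n$, $w_i\in\{y_i^+,y_i^-,z_i^+,z_i^-\}$. The group $\mathbb{H}_n=(\mathbb{Z}_2\times\mathbb{Z}_2)\wr S_n$, with $\mathbb{Z}_2\times\mathbb{Z}_2=\{1,*,\zeta,*\zeta\}$, acts on $P_n^*$: $h=(a_1,\dots,a_n;\sigma)$ sends $y_i^+\mapsto y_{\sigma(i)}^+$, $y_i^-\mapsto \pm y_{\sigma(i)}^-$ (sign $+$ iff $a_{\sigma(i)}\in\{1,\zeta\}$), $z_i^+\mapsto\pm z_{\sigma(i)}^+$ ($+$ iff $a_{\sigma(i)}\in\{1,*\}$), $z_i^-\mapsto\pm z_{\sigma(i)}^-$ ($+$ iff $a_{\sigma(i)}\in\{1,*\zeta\}$). The character of $P_n^*/(P_n^*\cap Id_2^*(M_{1,2}(F)))$ is the $n$-th $*$-cocharacter $\chi_n^*(M_{1,2}(F))$. Irreducible $\mathbb{H}_n$-characters $\chi_{\langle\lambda\rangle}$ correspond to multipartitions $\langle\lambda\rangle=(\lambda(1),\dots,\lambda(4))$, $\lambda(i)\vdash n_i$, $\sum n_i=n$, with $\lambda(1),\dots,\lambda(4)$ corresponding to the variable types $y^+,y^-,z^+,z^-$; equivalently $m_{\langle\lambda\rangle}$ is the multiplicity of $\chi_{\lambda(1)}\otimes\cdots\otimes\chi_{\lambda(4)}$ in the $S_{n_1}\times\cdots\times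 S_{n_4}$-character of the multilinear polynomials with $n_1,\dots,n_4$ variables of the four types modulo identities. $h(\mu)$ is the height of a partition $\mu$; $\emptyset$ is the empty partition. *)

(* Defs.v *)
From HB Require Import structures.
From mathcomp Require Import all_boot all_order all_fingroup all_algebra.
From mathcomp Require Import boolp.

Set Implicit Arguments.
Unset Strict Implicit.
Unset Printing Implicit Defensive.

Import GRing.Theory.
Local Open Scope ring_scope.

Section Defs.
Variable F : fieldType.

(* indices 0,1,2 stand for 1,2,3; index 0 has degree 1, indices 1,2 degree 0 *)
Definition mdeg (i : 'I_3) : bool := (val i == 0)%N.

Definition meven (A : 'M[F]_3) : bool :=
  [forall i, forall j, (mdeg i != mdeg j) ==> (A i j == 0)].
Definition modd (A : 'M[F]_3) : bool :=
  [forall i, forall j, (mdeg i == mdeg j) ==> (A i j == 0)].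

(* orthosymplectic superinvolution:
   rows (a,b,c),(d,e,f),(g,h,i)  |->  rows (a,-g,d),(c,i,-f),(-b,-h,e) *)
Definition mstar (A : 'M[F]_3) : 'M[F]_3 :=
  let e (r c : nat) : F := A (inord r) (inord c) in
  \matrix_(i < 3, j < 3)
    match val i, val j with
    | 0, 0 => e 0 0 | 0, 1 => - e 2 0 | 0, _ => e 1 0
    | 1, 0 => e 0 2 | 1, 1 => e 2 2   | 1, _ => - e 1 2
    | _, 0 => - e 0 1 | _, 1 => - e 2 1 | _, _ => e 1 1
    end%N.

(* kinds: 0 = y^+ (even sym), 1 = y^- (even skew),
          2 = z^+ (odd sym),  3 = z^- (odd skew) *)
Definition in_part (k : nat) (A : 'M[F]_3) : bool :=
  match k with
  | 0 => meven A && (mstar A == A)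
  | 1 => meven A && (mstar A == - A)
  | 2 => modd A && (mstar A == A)
  | _ => modd A && (mstar A == - A)
  end%N.

(* An element of P_n (in the fixed variables x_0..x_{n-1}) is given by its
   coefficient on each monomial x_{s 0} x_{s 1} ... x_{s (n-1)}, s in S_n.  *)
Notation mpoly_ml n := {ffun {perm 'I_n} -> F^o}.

Definition ml_eval n (f : mpoly_ml n) (a : 'I_n -> 'M[F]_3) : 'M[F]_3 :=
  \sum_(s : {perm 'I_n}) f s *: \prod_(k < n) a (s k).

Definition is_star_id n (kind : 'I_n -> nat) (f : mpoly_ml n) : Prop :=
  forall a : 'I_n -> 'M[F]_3, (forall i, in_part (kind i) (a i)) ->
    ml_eval f a = 0.

(* left action of S_n on P_n by renaming variables x_i |-> x_{t i}:
   the monomial indexed by s goes to the one indexed by (t o s) = s * t *)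
Definition ml_act n (t : {perm 'I_n}) (f : mpoly_ml n) : mpoly_ml n :=
  [ffun s => f (s * t^-1)%g].

(* the maximal number of elements of V linearly independent modulo I
   (the bound N is any upper bound for the dimension of the ambient space) *)
Definition qdim (T : lmodType F) (V : T -> Prop) (I : T -> Prop) (N : nat)
  : nat :=
  \max_(d < N.+1 | `[< exists s : d.-tuple T, (forall i, V (tnth s i)) /\
        forall c : d.-tuple F,
          I (\sum_(i < d) tnth c i *: tnth s i) -> forall i, tnth c i = 0 >])
    (val d).

End Defs.

Definition is_partition (s : seq nat) : bool :=
  sorted geq s && all (fun x => 0 < x)%N s.

Definition two_part (a b : nat) : seq nat := [seq x <- [:: a + b; b] | 0 < x]%N.

(* cells (j, r, c) of the multipartition L = (L_0, ..., L_{k-1}), listed block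
   by block, row by row; the i-th cell receives variable x_i, which is of
   kind j (block j).  This is the canonical (row-reading) multitableau. *)
Definition mcells (L : seq (seq nat)) : seq (nat * nat * nat) :=
  flatten [seq flatten [seq [seq (j, r, c) | c <- iota 0 (nth 0%N (nth [::] L j) r)]
                           | r <- iota 0 (size (nth [::] L j))]
          | j <- iota 0 (size L)].

Section Mult.
Variable F : fieldType.
Variable L : seq (seq nat).

Local Notation n := (size (mcells L)).
Definition mcell (i : 'I_n) : nat * nat * nat := nth (0, 0, 0)%N (mcells L) i.
Definition mkind (i : 'I_n) : nat := (mcell i).1.1.
Definition mrow (i : 'I_n) : nat * nat := ((mcell i).1.1, (mcell i).1.2).
Definition mcol (i : 'I_n) : nat * nat := ((mcell i).1.1, (mcell i).2).

Definition mRowG : {set {perm 'I_n}} := [set p : {perm 'I_n} | [forall i, mrow (p i) == mrow i]].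
Definition mColG : {set {perm 'I_n}} := [set q : {perm 'I_n} | [forall i, mcol (q i) == mcol i]].

Definition myoung (f : {ffun {perm 'I_n} -> F^o}) : {ffun {perm 'I_n} -> F^o} :=
  \sum_(p in mRowG) \sum_(q in mColG)
     ((-1) ^+ odd_perm q) *: ml_act p (ml_act q f).

(* multiplicity m_<L> of chi_{L_0} (x) ... (x) chi_{L_{k-1}} in the
   S_{n_1} x ... x S_{n_k}-character of P_{n_1,...,n_k} / (P ∩ Id^*_2):
   = dim Hom(F[G] e, P/(P∩Id)) = dim e (P / (P ∩ Id)) = dim eP / (eP ∩ Id) *)
Definition star_mult : nat :=
  qdim (fun g : {ffun {perm 'I_n} -> F^o} => exists f, g = myoung f)
       (is_star_id (fun i => mkind i)) #|{perm 'I_n}|.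
End Mult.

(* Main.v *)
Require Import Defs.
From HB Require Import structures.
From mathcomp Require Import all_boot all_order all_fingroup all_algebra.
From mathcomp Require Import boolp ring zify.

Module M_A.
Set Implicit Arguments. Unset Strict Implicit. Unset Printing Implicit Defensive.
Import GRing.Theory.
Local Open Scope ring_scope.

Section A.
Variable F : fieldType.
Variable n : nat.
Implicit Types (f g : {ffun {perm 'I_n} -> F^o}) (a : 'I_n -> 'M[F]_3).

Lemma ml_eval_sum (I : Type) (r : seq I) (P : pred I) (G : I -> {ffun {perm 'I_n} -> F^o}) a :
  ml_eval (\sum_(i <- r | P i) G i) a = \sum_(i <- r | P i) ml_eval (G i) a.
Proof.
rewrite /ml_eval; under eq_bigr do rewrite sum_ffunE scaler_suml.
by rewrite exchange_big.
Qed.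

Lemma ml_evalZ c f a : ml_eval (c *: f) a = c *: ml_eval f a.
Proof.
rewrite /ml_eval scaler_sumr; apply: eq_bigr => s _.
by rewrite ffunE scalerA.
Qed.

Lemma ml_eval_act t f a : ml_eval (ml_act t f) a = ml_eval f (fun i => a (t i)).
Proof.
rewrite /ml_eval (reindex_inj (@mulIg _ t)) /=; apply: eq_bigr => s _.
rewrite /ml_act ffunE mulgK; congr (_ *: _); apply: eq_bigr => k _.
by rewrite permM.
Qed.

Lemma ml_eval_delta s0 a :
  ml_eval [ffun s => ((s == s0)%:R : F^o)] a = \prod_(k < n) a (s0 k).
Proof.
rewrite /ml_eval (bigD1 s0) //= [X in _ + X]big1 ?addr0.
  by rewrite ffunE eqxx scale1r.
by move=> s /negbTE sn; rewrite ffunE sn scale0r.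
Qed.

Lemma star_id_scale kind c f : c != 0 -> is_star_id kind (c *: f) -> is_star_id kind f.
Proof.
move=> c0 H a Ha; have := H a Ha; rewrite ml_evalZ => /eqP.
by rewrite scaler_eq0 (negbTE c0) => /eqP.
Qed.
End A.

Lemma qdim_pos (F : fieldType) (T : lmodType F) (V I : T -> Prop) N g :
  V g -> ~ I g -> (forall c, c != 0 -> I (c *: g) -> I g) -> (0 < N)%N ->
  (0 < qdim V I N)%N.
Proof.
move=> Vg nIg Isc N0; rewrite /qdim.
have h1 : (1 < N.+1)%N by [].
apply: (leq_trans _ (@leq_bigmax_cond _ _ _ (Ordinal h1) _)) => //.
apply/asboolP; exists [tuple g]; split.
  by move=> i; rewrite (ord1 i) tnth0.
move=> c Hc i; rewrite (ord1 i); move: Hc; rewrite big_ord1 tnth0.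
case: (eqVneq (tnth c ord0) 0) => // c0 Hc; exfalso; exact/nIg/(Isc _ c0).
Qed.

End M_A.
Import M_A.

Module M_Bm.
Set Implicit Arguments. Unset Strict Implicit. Unset Printing Implicit Defensive.
Import GRing.Theory.
Local Open Scope ring_scope.

Section Mx.
Variable F : fieldType.
Definition em (i j : nat) : 'M[F]_3 :=
  \matrix_(a < 3, b < 3) ((a == i :> nat) && (b == j :> nat))%:R.
Definition Pm := em 0 0.
Definition Qm := em 1 1 + em 2 2.
Definition ZA := em 0 1 - em 2 0.
Definition ZB := em 0 2 + em 1 0.
Definition TA := em 0 1 + em 2 0.
Definition TB := em 0 2 - em 1 0.
Definition Z1 := ZA + ZB.
Definition T1 := TB - TA.
Definition E22 := em 1 1.
Definition E21 := em 1 0.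
Definition Um := em 1 1 + em 1 2.
Definition Vm := em 1 2 - em 1 1.

Definition Vr (j r : nat) : 'M[F]_3 :=
  match j with
  | 0 => if (r == 0)%N then Qm else Pm
  | 2 => if (r == 0)%N then Z1 else ZA
  | 3 => if (r == 0)%N then T1 else TA
  | _ => 0
  end.

Ltac mx3 := rewrite -?mulmxE /Pm /Qm /ZA /ZB /TA /TB /Z1 /T1 /E22 /E21 /Um /Vm;
  apply/matrixP => -[[|[|[|?]]] ?] -[[|[|[|?]]] ?] //;
  rewrite !mxE ?big_ord_recr ?big_ord0 /= ?mxE /=; ring.

Lemma E22Q : E22 * Qm = E22. Proof. mx3. Qed.
Lemma E22P : E22 * Pm = 0. Proof. mx3. Qed.
Lemma E21Q : E21 * Qm = 0. Proof. mx3. Qed.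
Lemma E21P : E21 * Pm = E21. Proof. mx3. Qed.
Lemma E22Z1 : E22 * Z1 = E21. Proof. mx3. Qed.
Lemma E22ZA : E22 * ZA = 0. Proof. mx3. Qed.
Lemma E21ZA : E21 * ZA = E22. Proof. mx3. Qed.
Lemma E22T1 : E22 * T1 = - E21. Proof. mx3. Qed.
Lemma E22TA : E22 * TA = 0. Proof. mx3. Qed.
Lemma E21TA : E21 * TA = E22. Proof. mx3. Qed.
Lemma E21Z1 : E21 * Z1 = Um. Proof. mx3. Qed.
Lemma E21T1 : E21 * T1 = Vm. Proof. mx3. Qed.
Lemma UmT1 : Um * T1 = - (2%:R *: E21). Proof. mx3. Qed.
Lemma VmZ1 : Vm * Z1 = - (2%:R *: E21). Proof. mx3. Qed.

Lemma em_neq0 i j : (i < 3)%N -> (j < 3)%N -> em i j != 0.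
Proof.
move=> hi hj; apply/eqP => /matrixP /(_ (Ordinal hi) (Ordinal hj)).
by rewrite !mxE /= !eqxx /= => /eqP; rewrite oner_eq0.
Qed.
Lemma Um_neq0 : Um != 0.
Proof.
apply/eqP => /matrixP /(_ (@Ordinal 3 1 isT) (@Ordinal 3 1 isT)).
rewrite /Um !mxE /= addr0 => /eqP; by rewrite oner_eq0.
Qed.
Lemma Vm_neq0 : Vm != 0.
Proof.
apply/eqP => /matrixP /(_ (@Ordinal 3 1 isT) (@Ordinal 3 2 isT)).
rewrite /Vm !mxE /= subr0 => /eqP; by rewrite oner_eq0.
Qed.

Ltac ip := rewrite /in_part /meven /modd; apply/andP; split;
  [ apply/forallP => -[[|[|[|?]]] ?] //; apply/forallP => -[[|[|[|?]]] ?] //;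
    apply/implyP => _ /=; rewrite /Pm /Qm /ZA /ZB /TA /TB /Z1 /T1 !mxE /=; apply/eqP; ring
  | apply/eqP/matrixP => -[[|[|[|?]]] ?] -[[|[|[|?]]] ?] //;
    rewrite /mstar /Pm /Qm /ZA /ZB /TA /TB /Z1 /T1 !mxE /= ?inordK //= ; ring ].

Lemma in_part_Vr k r : in_part k (Vr k r).
Proof.
case: k => [|[|[|[|k]]]] /=.
- case: (r == 0%N); ip.
- ip.
- case: (r == 0%N); ip.
- case: (r == 0%N); ip.
- ip.
Qed.

Lemma flatten_kill (T : eqType) (W : T -> 'M[F]_3) (ULs : seq (seq T)) :
  (forall u, u \in ULs -> exists la, E22 * \prod_(x <- u) W x = la *: E22) ->
  (exists2 u, u \in ULs & E22 * \prod_(x <- u) W x = 0) ->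
  E22 * \prod_(x <- flatten ULs) W x = 0.
Proof.
elim: ULs => [_ [u]|u ULs IH Heig [v]] //.
rewrite /= big_cat /= mulrA inE => /orP [/eqP -> ->|vin Hv]; first by rewrite mul0r.
have [la ->] := Heig u (mem_head _ _).
rewrite -scalerAl IH ?scaler0 //; last by exists v.
by move=> u' u'in; apply: Heig; rewrite inE u'in orbT.
Qed.

Lemma flatten_eig (T : eqType) (W : T -> 'M[F]_3) (ULs : seq (seq T)) :
  (forall u, u \in ULs -> exists2 la, la != 0 & E22 * \prod_(x <- u) W x = la *: E22) ->
  exists2 la, la != 0 & E22 * \prod_(x <- flatten ULs) W x = la *: E22.
Proof.
elim: ULs => [_|u ULs IH Heig]; first by exists 1; rewrite ?oner_eq0 // big_nil mulr1 scale1r.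
have [la la0 Hu] := Heig u (mem_head _ _).
have [|mu mu0 Hr] := IH; first by move=> u' u'in; apply: Heig; rewrite inE u'in orbT.
exists (la * mu); first by rewrite mulf_neq0.
by rewrite /= big_cat /= mulrA Hu -scalerAl Hr scalerA.
Qed.

Lemma E21_prodY (T : eqType) (W : T -> 'M[F]_3) (s : seq T) :
  (forall x, x \in s -> exists r, W x = Vr 0 r) ->
  exists mu, E21 * \prod_(x <- s) W x = mu *: E21.
Proof.
elim: s => [_|x s IH H]; first by exists 1; rewrite big_nil mulr1 scale1r.
have [|mu Hmu] := IH; first by move=> y yin; apply: H; rewrite inE yin orbT.
have [r Hr] := H x (mem_head _ _).
rewrite big_cons mulrA Hr /=; case: (r == 0)%N.
  by exists 0; rewrite E21Q mul0r scale0r.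
by exists mu; rewrite E21P.
Qed.

Lemma E21_prodP (T : eqType) (W : T -> 'M[F]_3) (s : seq T) :
  (forall x, x \in s -> W x = Pm) -> E21 * \prod_(x <- s) W x = E21.
Proof.
elim: s => [_|x s IH H]; first by rewrite big_nil mulr1.
by rewrite big_cons mulrA H ?mem_head // E21P IH // => y yin; apply: H; rewrite inE yin orbT.
Qed.

Lemma E22_Y r : E22 * Vr 0 r = (if (r == 0)%N then 1 else 0) *: E22.
Proof. by rewrite /=; case: (r == 0)%N; rewrite ?E22Q ?E22P ?scale1r ?scale0r. Qed.

Lemma E21_pow (X : 'M[F]_3) c m : E21 * X = c *: E21 -> E21 * X ^+ m = c ^+ m *: E21.
Proof.
move=> H; elim: m => [|m IH]; first by rewrite expr0 mulr1 scale1r.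
by rewrite exprSr mulrA IH -scalerAl H scalerA exprSr.
Qed.

Lemma E21_ilv_nz (X Y : 'M[F]_3) m d1 d2 :
  (X = Z1 /\ Y = T1) \/ (X = T1 /\ Y = Z1) -> (2%:R : F) != 0 ->
  (d1 <= 1)%N -> (d2 <= 1)%N -> (d1 * d2 = 0)%N ->
  E21 * ((X * Y) ^+ m * (X ^+ d1 * Y ^+ d2)) != 0.
Proof.
move=> HXY h2 hd1 hd2 hd.
have H : E21 * (X * Y) = (- 2%:R) *: E21.
  by case: HXY => -[-> ->]; rewrite mulrA ?E21Z1 ?UmT1 ?E21T1 ?VmZ1 scaleNr.
rewrite mulrA (E21_pow _ H) -scalerAl scaler_eq0 negb_or expf_neq0 ?oppr_eq0 //=.
case: d1 hd1 hd => [|[|//]] _; case: d2 hd2 => [|[|//]] // _ _;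
  rewrite ?expr0 ?expr1 ?mulr1 ?mul1r.
- by rewrite em_neq0.
- by case: HXY => -[_ ->]; rewrite ?E21Z1 ?E21T1 ?Um_neq0 ?Vm_neq0.
- by case: HXY => -[-> _]; rewrite ?E21Z1 ?E21T1 ?Um_neq0 ?Vm_neq0.
Qed.
End Mx.

End M_Bm.
Import M_Bm.

Module M_C.
Set Implicit Arguments. Unset Strict Implicit. Unset Printing Implicit Defensive.

Notation cell := (nat * nat * nat)%type.
Definition seg (j r l : nat) : seq cell := [seq (j, r, c) | c <- iota 0 l].

Lemma seg_uniq j r l : uniq (seg j r l).
Proof. by rewrite map_inj_uniq ?iota_uniq // => x y [->]. Qed.

Lemma mem_seg x j r l : (x \in seg j r l) = [&& x.1.1 == j, x.1.2 == r & x.2 < l].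
Proof.
case: x => [[j' r'] c] /=; apply/mapP/and3P => [[c' ] | [/eqP-> /eqP-> hc]].
  by rewrite mem_iota add0n => hc [-> -> ->].
by exists c; rewrite // mem_iota.
Qed.

Lemma rows2 (s : seq nat) j : (size s <= 2)%N ->
  flatten [seq [seq (j, r, c) | c <- iota 0 (nth 0%N s r)] | r <- iota 0 (size s)]
  = seg j 0 (nth 0%N s 0) ++ seg j 1 (nth 0%N s 1).
Proof. by case: s => [|x [|y [|z s]]] //= _; rewrite ?cats0. Qed.

Lemma two_part_size a b : (size (two_part a b) <= 2)%N.
Proof. by rewrite /two_part /=; case: (0 < a + b)%N; case: (0 < b)%N. Qed.
Lemma two_part_nth0 a b : (0 < a + b)%N -> nth 0%N (two_part a b) 0 = (a + b)%N.
Proof. by rewrite /two_part /= => ->. Qed.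
Lemma two_part_nth1 a b : (0 < a + b)%N -> nth 0%N (two_part a b) 1 = b.
Proof. by rewrite /two_part /= => ->; case: b => //= b; rewrite addnS. Qed.

Lemma mcells_eq (lam1 : seq nat) w1 w2 r1 r2 :
  (size lam1 <= 2)%N -> (0 < w1 + w2)%N -> (0 < r1 + r2)%N ->
  mcells [:: lam1; [::]; two_part w1 w2; two_part r1 r2] =
  seg 0 0 (nth 0%N lam1 0) ++ seg 0 1 (nth 0%N lam1 1) ++ seg 2 0 (w1 + w2) ++
  seg 2 1 w2 ++ seg 3 0 (r1 + r2) ++ seg 3 1 r2.
Proof.
move=> hl hw hr; rewrite /mcells /=.
rewrite !rows2 ?two_part_size // !two_part_nth0 // !two_part_nth1 //.
by rewrite !catA cats0.
Qed.

End M_C.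
Import M_C.

Module M_D.
Set Implicit Arguments. Unset Strict Implicit. Unset Printing Implicit Defensive.
Import GRing.Theory.

Fixpoint ilv (T : Type) (s t : seq T) : seq T :=
  match s, t with
  | x :: s', y :: t' => x :: y :: ilv s' t'
  | [::], _ => t
  | _, [::] => s
  end.

Lemma count_ilv (T : Type) (P : pred T) s t : count P (ilv s t) = (count P s + count P t)%N.
Proof.
elim: s t => [|x s IH] [|y t] //=; first by rewrite addn0.
by rewrite IH; lia.
Qed.

Lemma prod_const_seq (R : ringType) (T : eqType) (G : T -> R) s X :
  (forall x, x \in s -> G x = X) -> (\prod_(x <- s) G x = X ^+ size s)%R.
Proof.
elim: s => [|x s IH] H; first by rewrite big_nil expr0.
by rewrite big_cons H ?mem_head // IH ?exprS // => y ys; apply: H; rewrite inE ys orbT.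
Qed.

Lemma ilv_prod (R : ringType) (T : eqType) (G : T -> R) (s t : seq T) X Y :
  (forall x, x \in s -> G x = X) -> (forall y, y \in t -> G y = Y) ->
  (\prod_(x <- ilv s t) G x = (X * Y) ^+ minn (size s) (size t) *
     (X ^+ (size s - size t) * Y ^+ (size t - size s)))%R.
Proof.
elim: s t => [|x s IH] [|y t] HX HY /=.
- by rewrite big_nil !expr0 !mul1r.
- by rewrite (prod_const_seq HY) /= min0n !expr0 !mul1r subn0.
- by rewrite (prod_const_seq HX) /= minn0 !expr0 !mul1r mulr1 subn0.
- rewrite !big_cons HX ?mem_head // HY ?mem_head // IH; last 2 first.
  + by move=> z zs; apply: HX; rewrite inE zs orbT.
  + by move=> z zs; apply: HY; rewrite inE zs orbT.
  by rewrite minnSS !subSS exprS !mulrA.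
Qed.

Section D.
Variables (L : seq (seq nat)) (A B w1 w2 r1 r2 : nat).
Local Notation cs := (mcells L).
Local Notation n := (size (mcells L)).
Hypothesis HL : cs = seg 0 0 A ++ seg 0 1 B ++ seg 2 0 (w1 + w2) ++
  seg 2 1 w2 ++ seg 3 0 (r1 + r2) ++ seg 3 1 r2.
Hypotheses (hw : (0 < w1 + w2)%N) (hr : (0 < r1 + r2)%N)
  (h1 : (w1 <= r1 + 2)%N) (h2 : (r1 <= w1 + 2)%N).

Lemma seg_disj j r l j' r' l' : (j, r) != (j', r') ->
  has (mem (seg j r l)) (seg j' r' l') = false.
Proof.
move=> ne; apply/hasPn => x /mapP [c _ ->].
change (~~ ((j', r', c) \in seg j r l)); rewrite mem_seg /=.
by apply/negP => /and3P [/eqP e1 /eqP e2 _]; move: ne; rewrite e1 e2 eqxx.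
Qed.

Lemma cs_uniq : uniq cs.
Proof.
by rewrite HL !cat_uniq !has_cat !seg_uniq !seg_disj.
Qed.

Lemma mem_cs x : (x \in cs) = [|| [&& x.1.1 == 0, x.1.2 == 0 & x.2 < A],
  [&& x.1.1 == 0, x.1.2 == 1 & x.2 < B], [&& x.1.1 == 2, x.1.2 == 0 & x.2 < w1 + w2],
  [&& x.1.1 == 2, x.1.2 == 1 & x.2 < w2], [&& x.1.1 == 3, x.1.2 == 0 & x.2 < r1 + r2]
  | [&& x.1.1 == 3, x.1.2 == 1 & x.2 < r2]]%N.
Proof. by rewrite HL !mem_cat !mem_seg. Qed.

Definition bA := (0 < w1 + r1)%N.
Definition Y0 := seg 0 0 A.
Definition Y1 := seg 0 1 B.
Definition mid := if bA then [::] else Y1.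
Definition mid2 := if bA then Y1 else [::].
Definition zunit (c : nat) : seq cell :=
  (2, 0, c)%N :: (if c == 0%N then mid else [::]) ++ [:: (2, 1, c)%N].
Definition tunit (c : nat) : seq cell := [:: (3, 0, c); (3, 1, c)]%N.
Definition UL := [seq [:: x] | x <- Y0] ++ [seq zunit c | c <- iota 0 w2] ++
  [seq tunit c | c <- iota 0 r2].
Definition Zs := [seq (2, 0, c)%N | c <- iota w2 w1].
Definition Ts := [seq (3, 0, c)%N | c <- iota r2 r1].
Definition Xs := if (r1 <= w1)%N then Zs else Ts.
Definition Ys := if (r1 <= w1)%N then Ts else Zs.
Definition rest := take 1 Xs ++ mid2 ++ ilv (drop 1 Xs) Ys.
Definition ordc := flatten UL ++ rest.

Lemma count_pairs (f g : nat -> cell) (P : pred cell) s :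
  count P (flatten [seq [:: f c; g c] | c <- s]) = (count P (map f s) + count P (map g s))%N.
Proof. elim: s => //= c s IH; rewrite IH; lia. Qed.

Lemma count_zunits P : count P (flatten [seq zunit c | c <- iota 0 w2]) =
  (count P mid + count P (seg 2 0 w2) + count P (seg 2 1 w2))%N.
Proof.
case Ew: w2 => [|k].
  have -> : mid = [::] by rewrite /mid /bA; case: ifP => //; lia.
  by [].
rewrite /seg /= -!/(seg _ _ _).
have E : [seq zunit c | c <- iota 1 k] = [seq [:: (2, 0, c); (2, 1, c)]%N | c <- iota 1 k].
  apply/eq_in_map => c; rewrite mem_iota /zunit; case: c => //.
rewrite E count_cat count_pairs /= count_cat /= addn0.
set a1 := count _ mid; set a2 := count _ [seq _ | _ <- iota 1 k]; set a3 := count _ [seq _ | _ <- iota 1 k].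
lia.
Qed.

Lemma ordc_perm : perm_eq ordc cs.
Proof.
apply/seq.permP => P.
rewrite /ordc /UL /rest !count_cat !flatten_cat !count_cat flatten_seq1.
rewrite count_zunits count_pairs count_ilv.
have -> : count P (take 1 Xs) + (count P mid2 + (count P (drop 1 Xs) + count P Ys)) =
   (count P mid2 + count P Zs + count P Ts)%N.
  have : count P Xs = (count P (take 1 Xs) + count P (drop 1 Xs))%N
    by rewrite -count_cat cat_take_drop.
  rewrite /Xs /Ys; case: ifP => _ ->; lia.
have -> : count P mid = (count P Y1 - count P mid2)%N.
  by rewrite /mid /mid2; case: ifP => _ /=; lia.
have Hm : (count P mid2 <= count P Y1)%N by rewrite /mid2; case: ifP.
have EZ : seg 2 0 (w1 + w2) = seg 2 0 w2 ++ Zs by rewrite /seg /Zs addnC iotaD map_cat.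
have ET : seg 3 0 (r1 + r2) = seg 3 0 r2 ++ Ts by rewrite /seg /Ts addnC iotaD map_cat.
rewrite HL EZ ET !count_cat -/Y0 -/Y1.
have -> : [seq (3, 0, c)%N | c <- iota 0 r2] = seg 3 0 r2 by [].
have -> : [seq (3, 1, c)%N | c <- iota 0 r2] = seg 3 1 r2 by [].
set c1 := count P Y0; set c2 := count P Y1; set c3 := count P mid2.
set c4 := count P (seg 2 0 w2); set c5 := count P (seg 2 1 w2).
set c6 := count P (seg 3 0 r2); set c7 := count P (seg 3 1 r2).
set c8 := count P Zs; set c9 := count P Ts.
lia.
Qed.

Variable i0 : 'I_n.
Definition idx (x : cell) : 'I_n := insubd i0 (index x cs).

Lemma idxK x : x \in cs -> mcell (idx x) = x.
Proof.
by move=> xin; rewrite /mcell /idx val_insubd index_mem xin nth_index.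
Qed.

Lemma mcell_in (i : 'I_n) : mcell i \in cs.
Proof. exact: mem_nth. Qed.

Lemma mcell_inj : injective (@mcell L).
Proof.
move=> i j /eqP; rewrite /mcell nth_uniq ?cs_uniq // => /eqP; exact: val_inj.
Qed.

Lemma cellK i : idx (mcell i) = i.
Proof. by apply: mcell_inj; rewrite idxK ?mcell_in. Qed.

Definition ord := map idx ordc.
Lemma size_ord : size ord = n.
Proof. by rewrite size_map (perm_size ordc_perm). Qed.

Lemma ord_uniq : uniq ord.
Proof.
rewrite map_inj_in_uniq ?(perm_uniq ordc_perm) ?cs_uniq //.
move=> x y xin yin E.
rewrite (perm_mem ordc_perm) in xin; rewrite (perm_mem ordc_perm) in yin.
by rewrite -(idxK xin) -(idxK yin) E.
Qed.

Definition s0f (k : 'I_n) : 'I_n := nth i0 ord k.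
Lemma s0f_inj : injective s0f.
Proof.
move=> i j /eqP; rewrite /s0f nth_uniq ?size_ord ?ord_uniq // => /eqP; exact: val_inj.
Qed.
Definition s0 : {perm 'I_n} := perm s0f_inj.

Lemma prod_s0 (R : ringType) (G : 'I_n -> R) :
  (\prod_(k < n) G (s0 k) = \prod_(x <- ordc) G (idx x))%R.
Proof.
rewrite -(big_map idx xpredT) -/ord (big_nth i0) size_ord big_mkord.
by apply: eq_bigr => k _; rewrite permE.
Qed.

Lemma cs_row x : x \in cs -> (x.1.2 <= 1)%N.
Proof. by rewrite mem_cs => /or4P [| | |/or3P []] /and3P [_ /eqP -> _]. Qed.

Lemma cs_row1 j c : (j, 1, c)%N \in cs ->
  [\/ j = 0%N /\ (c < B)%N, j = 2%N /\ (c < w2)%N | j = 3%N /\ (c < r2)%N].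
Proof.
rewrite mem_cs => /or4P [H|H|H|/or3P [H|H|H]]; case/and3P: H => /eqP /= -> /eqP /= er hc; try done.
- by constructor 1.
- by constructor 2.
- by constructor 3.
Qed.

Lemma cs_row0Y c : (0, 0, c)%N \in cs -> (c < A)%N.
Proof.
by rewrite mem_cs => /or4P [H|H|H|/or3P [H|H|H]]; case/and3P: H => /eqP /= e1 /eqP /= e2 hc.
Qed.

Variable F : fieldType.
Local Open Scope ring_scope.
Definition av (i : 'I_n) : 'M[F]_3 := Vr F (mkind i) (mcell i).1.2.
Local Notation E22 := (E22 F).
Local Notation E21 := (E21 F).

Definition cq (q : {perm 'I_n}) x := mcell (q (idx x)).

Lemma colq_kind q i : q \in mColG L ->
  (mcell (q i)).1.1 = (mcell i).1.1 /\ (mcell (q i)).2 = (mcell i).2.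
Proof. by rewrite inE => /forallP /(_ i) /eqP [-> ->]. Qed.

Lemma cq_eq q x : q \in mColG L -> x \in cs -> cq q x = (x.1.1, (cq q x).1.2, x.2).
Proof.
move=> qC xin; have [] := colq_kind (idx x) qC; rewrite idxK // /cq.
by case: (mcell _) => [[a b] c] /= -> ->.
Qed.

Lemma cq_fix q x : x \in cs -> cq q x = x -> q (idx x) = idx x.
Proof. by move=> xin E; rewrite -{2}E /cq cellK. Qed.

Lemma Wq q x : q \in mColG L -> x \in cs -> av (q (idx x)) = Vr F x.1.1 (cq q x).1.2.
Proof.
move=> qC xin; have := cq_eq qC xin; rewrite /cq /av /mkind => E.
by rewrite [in LHS]E.
Qed.

Lemma inY1 y : y \in Y1 -> y \in cs /\ y.1.1 = 0%N.
Proof.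
move=> yin; split; first by rewrite HL !mem_cat yin orbT.
by move: yin; rewrite mem_seg => /and3P [/eqP -> _ _].
Qed.

Lemma mid_sub y c : y \in (if c == 0%N then mid else [::]) -> y \in Y1.
Proof. by case: ifP => // _; rewrite /mid; case: ifP. Qed.

Lemma z0in c : (c < w2)%N -> (2, 0, c)%N \in cs.
Proof. by move=> cin; rewrite HL !mem_cat !mem_seg /= (leq_trans cin (leq_addl _ _)). Qed.
Lemma z1in c : (c < w2)%N -> (2, 1, c)%N \in cs.
Proof. by move=> cin; rewrite HL !mem_cat !mem_seg /= cin ?orbT. Qed.
Lemma t0in c : (c < r2)%N -> (3, 0, c)%N \in cs.
Proof. by move=> cin; rewrite HL !mem_cat !mem_seg /= (leq_trans cin (leq_addl _ _)) ?orbT. Qed.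
Lemma t1in c : (c < r2)%N -> (3, 1, c)%N \in cs.
Proof. by move=> cin; rewrite HL !mem_cat !mem_seg /= cin ?orbT. Qed.

Lemma pair_row1 q j c : q \in mColG L -> (j, 0, c)%N \in cs -> (j, 1, c)%N \in cs ->
  (cq q (j, 0, c)).1.2 = 0%N -> (cq q (j, 1, c)).1.2 <> 0%N.
Proof.
move=> qC x0in x1in E0 E1.
have f0 : q (idx (j, 0, c)) = idx (j, 0, c)%N by apply: cq_fix; rewrite // (cq_eq qC x0in) E0.
have f1 : q (idx (j, 1, c)) = idx (j, 0, c)%N.
  rewrite -[LHS]cellK; change (idx (cq q (j, 1, c)%N) = idx (j, 0, c)%N).
  by rewrite (cq_eq qC x1in) E1.
have : idx (j, 1, c)%N = idx (j, 0, c)%N by apply: (@perm_inj _ q); rewrite f0 f1.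
by move/(congr1 (@mcell L)); rewrite !idxK.
Qed.

Lemma unit_eig q u : q \in mColG L -> u \in UL ->
  exists la, E22 * \prod_(x <- u) av (q (idx x)) = la *: E22.
Proof.
move=> qC; rewrite /UL !mem_cat => /or3P [/mapP [x xin ->]|/mapP [c cin ->]|/mapP [c cin ->]].
- have xcs : x \in cs by rewrite HL mem_cat xin.
  move: xin; rewrite mem_seg => /and3P [/eqP ex _ _].
  by rewrite big_seq1 (Wq qC xcs) ex E22_Y; eexists.
- rewrite mem_iota leq0n add0n /= in cin.
  have x0in := z0in cin; have x1in := z1in cin.
  rewrite /zunit big_cons big_cat big_seq1 /= (Wq qC x0in) (Wq qC x1in) /=.
  case E0: (cq q (2, 0, c)%N).1.2 => [|rr0]; last first.
    by exists 0; rewrite /= mulrA E22ZA mul0r scale0r.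
  case E1: (cq q (2, 1, c)%N).1.2 => [|rr1].
    by have := pair_row1 qC x0in x1in E0; rewrite E1.
  set m := (if _ then _ else _).
  have [|mu Hmu] := E21_prodY (W := fun x => av (q (idx x))) (s := m).
    move=> y /mid_sub /inY1 [ycs y0]; rewrite (Wq qC ycs) y0; by eexists.
  exists mu; rewrite /= !mulrA E22Z1 Hmu -scalerAl E21ZA //.
- rewrite mem_iota leq0n add0n /= in cin.
  have x0in := t0in cin; have x1in := t1in cin.
  rewrite /tunit !big_cons big_nil mulr1 (Wq qC x0in) (Wq qC x1in) /=.
  case E0: (cq q (3, 0, c)%N).1.2 => [|rr0]; last first.
    by exists 0; rewrite /= mulrA E22TA mul0r scale0r.
  case E1: (cq q (3, 1, c)%N).1.2 => [|rr1].
    by have := pair_row1 qC x0in x1in E0; rewrite E1.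
  by exists (-1); rewrite /= mulrA E22T1 mulNr E21TA scaleN1r.
Qed.

Lemma unit_kill q : q \in mColG L -> q != 1%g ->
  exists2 u, u \in UL & E22 * \prod_(x <- u) av (q (idx x)) = 0.
Proof.
move=> qC qn1.
have [i qi] : exists i, q i != i.
  case: (pickP (fun i => q i != i)) => [i qi|H]; first by exists i.
  case/negP: qn1; apply/eqP/permP => i; rewrite perm1; apply/eqP.
  by move: (H i) => /= /negbFE.
have [ek ec] := colq_kind i qC.
have xcs := mcell_in i; have ycs := mcell_in (q i).
have rx := cs_row xcs; have ry := cs_row ycs.
have xy : mcell i != mcell (q i) by apply: contra qi => /eqP /mcell_inj E; rewrite -E.
move: ek ec; set j := (mcell i).1.1; set c := (mcell i).2 => ek ec.
have ex : mcell i = (j, (mcell i).1.2, c).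
  by rewrite /j /c; case: (mcell i) => [[]].
have ey : mcell (q i) = (j, (mcell (q i)).1.2, c).
  by rewrite -ek -ec; case: (mcell (q i)) => [[]].
have [hh0 hh1 r0ne] : [/\ (j, 0, c)%N \in cs, (j, 1, c)%N \in cs & (cq q (j, 0, c)%N).1.2 <> 0%N].
  case Ex: (mcell i).1.2 rx => [|[|//]] _.
  - case Ey: (mcell (q i)).1.2 ry => [|[|//]] _.
      by move: xy; rewrite ex ey Ex Ey eqxx.
    have e0 : idx (j, 0, c)%N = i by rewrite -Ex -ex cellK.
    split; [by rewrite -Ex -ex|by rewrite -Ey -ey|].
    by rewrite /cq e0 Ey.
  - case Ey: (mcell (q i)).1.2 ry => [|[|//]] _; last first.
      by move: xy; rewrite ex ey Ex Ey eqxx.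
    have e1 : idx (j, 1, c)%N = i by rewrite -Ex -ex cellK.
    have hh0 : (j, 0, c)%N \in cs by rewrite -Ey -ey.
    have hh1 : (j, 1, c)%N \in cs by rewrite -Ex -ex.
    split => // E0; apply: (pair_row1 qC hh0 hh1 E0).
    by rewrite /cq e1 Ey.
have Hk : forall r, r <> 0%N -> E22 * Vr F j r = 0.
  move=> r rn0; case: (cs_row1 hh1) => -[-> _] /=; case: eqP => // _.
  - by rewrite E22P.
  - by rewrite E22ZA.
  - by rewrite E22TA.
have W0 := Wq qC hh0; rewrite /= in W0.
case: (cs_row1 hh1) => -[ej cb].
- exists [:: (j, 0, c)%N].
    rewrite /UL !mem_cat; apply/orP; left; apply/mapP; exists (j, 0, c)%N => //.
    rewrite mem_seg /= ej /=.
    move: hh0; rewrite ej; exact: cs_row0Y.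
  by rewrite big_seq1 W0 Hk.
- exists (zunit c).
    rewrite /UL !mem_cat; apply/orP; right; apply/orP; left; apply/mapP; exists c => //.
    by rewrite mem_iota.
  rewrite ej in W0 Hk.
  rewrite ej in r0ne.
  by rewrite /zunit big_cons mulrA W0 Hk ?mul0r.
- exists (tunit c).
    rewrite /UL !mem_cat; apply/orP; right; apply/orP; right; apply/mapP; exists c => //.
    by rewrite mem_iota.
  rewrite ej in W0 Hk r0ne.
  by rewrite /tunit big_cons mulrA W0 Hk ?mul0r.
Qed.

Lemma term_kill q : q \in mColG L -> q != 1%g ->
  E22 * \prod_(x <- ordc) av (q (idx x)) = 0.
Proof.
move=> qC qn1; rewrite /ordc big_cat mulrA.
rewrite (flatten_kill (fun u uin => unit_eig qC uin) (unit_kill qC qn1)).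
by rewrite mul0r.
Qed.

Lemma av_id x : x \in cs -> av (idx x) = Vr F x.1.1 x.1.2.
Proof. by move=> xin; rewrite /av /mkind idxK. Qed.

Lemma prefix_eig : exists2 la, la != 0 &
  E22 * \prod_(x <- flatten UL) av (idx x) = la *: E22.
Proof.
apply: flatten_eig => u; rewrite /UL !mem_cat => /or3P [/mapP [x xin ->]|/mapP [c cin ->]|/mapP [c cin ->]].
- have xcs : x \in cs by rewrite HL mem_cat xin.
  move: xin; rewrite mem_seg => /and3P [/eqP ex /eqP er _].
  by exists 1; rewrite ?oner_eq0 // big_seq1 (av_id xcs) ex er /= E22Q scale1r.
- rewrite mem_iota leq0n add0n /= in cin.
  have x0in := z0in cin; have x1in := z1in cin.
  exists 1; rewrite ?oner_eq0 // scale1r.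
  rewrite /zunit big_cons big_cat big_seq1 /= (av_id x0in) (av_id x1in) /= !mulrA E22Z1.
  rewrite E21_prodP ?E21ZA // => y /mid_sub yin; have [ycs y0] := inY1 yin.
  by move: yin; rewrite mem_seg => /and3P [_ /eqP y1 _]; rewrite (av_id ycs) y0 y1.
- rewrite mem_iota leq0n add0n /= in cin.
  have x0in := t0in cin; have x1in := t1in cin.
  exists (-1); rewrite ?oppr_eq0 ?oner_eq0 // scaleN1r.
  by rewrite /tunit !big_cons big_nil mulr1 (av_id x0in) (av_id x1in) /= mulrA E22T1 mulNr E21TA.
Qed.

Hypothesis Hch : (2%:R : F) != 0.

Lemma Zs_val x : x \in Zs -> av (idx x) = Z1 F.
Proof.
move=> /mapP [c]; rewrite mem_iota => /andP [_ hc] ->.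
rewrite av_id //= HL !mem_cat !mem_seg /=.
by rewrite (leq_trans hc) // addnC.
Qed.

Lemma Ts_val x : x \in Ts -> av (idx x) = T1 F.
Proof.
move=> /mapP [c]; rewrite mem_iota => /andP [_ hc] ->.
rewrite av_id //= HL !mem_cat !mem_seg /=.
by rewrite (leq_trans hc) ?orbT // addnC.
Qed.

Lemma Y1_val x : x \in Y1 -> av (idx x) = Pm F.
Proof.
move=> xin; have [xcs x0] := inY1 xin.
by move: xin; rewrite mem_seg => /and3P [_ /eqP x1 _]; rewrite (av_id xcs) x0 x1.
Qed.

Lemma rest_nz : E22 * \prod_(x <- rest) av (idx x) != 0.
Proof.
rewrite /rest /mid2 /bA.
have sZ : size Zs = w1 by rewrite size_map size_iota.
have sT : size Ts = r1 by rewrite size_map size_iota.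
case: (ltnP 0 (w1 + r1)) => hb; last first.
  have w10 : w1 = 0%N by lia.
  have r10 : r1 = 0%N by lia.
  have -> : Xs = [::] by rewrite /Xs /Zs /Ts w10 r10.
  have -> : Ys = [::] by rewrite /Ys /Zs /Ts w10 r10.
  by rewrite /= big_nil mulr1 em_neq0.
pose X := if (r1 <= w1)%N then Z1 F else T1 F.
pose Y := if (r1 <= w1)%N then T1 F else Z1 F.
have HX : forall x, x \in Xs -> av (idx x) = X.
  by rewrite /Xs /X; case: ifP => _; [exact: Zs_val|exact: Ts_val].
have HY : forall x, x \in Ys -> av (idx x) = Y.
  by rewrite /Ys /Y; case: ifP => _; [exact: Ts_val|exact: Zs_val].
have sX : size Xs = (if (r1 <= w1)%N then w1 else r1) by rewrite /Xs; case: ifP.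
have sY : size Ys = (if (r1 <= w1)%N then r1 else w1) by rewrite /Ys; case: ifP.
case EX: Xs HX sX => [|x0 Xs'] HX sX.
  by move: sX; case: ifP => /= ? ?; lia.
rewrite /= take0 drop0 big_cons big_cat /= !mulrA HX ?mem_head //.
have [eps eps0 Heps] : exists2 eps : F, eps != 0 & E22 * X = eps *: E21.
  rewrite /X; case: ifP => _.
    by exists 1; rewrite ?oner_eq0 // E22Z1 scale1r.
  by exists (-1); rewrite ?oppr_eq0 ?oner_eq0 // E22T1 scaleN1r.
rewrite Heps -!scalerAl big_cat /= mulrA E21_prodP; last by move=> y yin; rewrite Y1_val.
rewrite (ilv_prod (X := X) (Y := Y)); last 2 first.
- by move=> y ys; apply: HX; rewrite inE ys orbT.
- exact: HY.
rewrite scaler_eq0 negb_or eps0 /=.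
rewrite E21_prodP; last by move=> y yin; rewrite Y1_val.
have Hsz : [/\ (size Xs' - size Ys <= 1)%N, (size Ys - size Xs' <= 1)%N &
   ((size Xs' - size Ys) * (size Ys - size Xs') = 0)%N].
  move: sX sY; case: ifP => hle /= sX sY; split; nia.
case: Hsz => ? ? ?.
apply: E21_ilv_nz => //.
by rewrite /X /Y; case: ifP; [left|right].
Qed.

Lemma term_one : E22 * \prod_(x <- ordc) av (idx x) != 0.
Proof.
rewrite /ordc big_cat mulrA; have [la la0 Hla] := prefix_eig.
by rewrite Hla -scalerAl scaler_eq0 negb_or la0 rest_nz.
Qed.

Hypothesis Hk : forall k, (0 < k)%N -> (k%:R : F) != 0.

Lemma ml_eval_ext (f : {ffun {perm 'I_n} -> F^o}) b b' : b =1 b' -> ml_eval f b = ml_eval f b'.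
Proof. by move=> E; apply: eq_bigr => s _; congr (_ *: _); apply: eq_bigr => k _; rewrite E. Qed.

Lemma av_row p j : p \in mRowG L -> av (p j) = av j.
Proof. by rewrite inE => /forallP /(_ j) /eqP; rewrite /av /mkind /mrow => -[-> ->]. Qed.

Definition f0 : {ffun {perm 'I_n} -> F^o} := [ffun s => ((s == s0)%:R : F^o)].

Lemma final_nz : E22 * ml_eval (myoung f0) av != 0.
Proof.
pose S := \sum_(q in mColG L) ((-1) ^+ odd_perm q) *: ml_eval f0 (fun i => av (q i)).
have E : ml_eval (myoung f0) av = S *+ #|mRowG L|.
  rewrite /myoung ml_eval_sum -sumr_const; apply: eq_bigr => p pR.
  rewrite ml_eval_sum; apply: eq_bigr => q qC.
  rewrite ml_evalZ !ml_eval_act; congr (_ *: _); apply: ml_eval_ext => i.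
  by rewrite av_row.
have R1 : (1%g : {perm 'I_n}) \in mRowG L by rewrite inE; apply/forallP => i; rewrite perm1.
have C1 : (1%g : {perm 'I_n}) \in mColG L by rewrite inE; apply/forallP => i; rewrite perm1.
rewrite E mulrnAr -scaler_nat scaler_eq0 negb_or Hk ?card_gt0; last by apply/set0Pn; exists 1%g.
rewrite /S mulr_sumr (bigD1 1%g) //= big1 ?addr0.
  rewrite -scalerAr ml_eval_delta odd_perm1 expr0 scale1r (prod_s0 (fun i => av ((1%g : {perm 'I_n}) i))).
  by under eq_bigr do rewrite perm1; exact: term_one.
move=> q /andP [qC qn1]; rewrite -scalerAr ml_eval_delta (prod_s0 (fun i => av (q i))) term_kill ?scaler0 //.
Qed.
End D.

End M_D.
Import M_D.

Unset Implicit Arguments.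
Set Strict Implicit.
Set Printing Implicit Defensive.
Import GRing.Theory.

Theorem proposition5p5 (F : fieldType) (charF0 : [pchar F]%R =i pred0)
    (lam1 : seq nat) (w1 w2 r1 r2 : nat) :
  is_partition lam1 -> (size lam1 <= 2)%N ->
  (0 < w1 + w2)%N -> (0 < r1 + r2)%N ->
  (w1 <= r1 + 2)%N -> (r1 <= w1 + 2)%N ->
  star_mult F [:: lam1; [::]; two_part w1 w2; two_part r1 r2] != 0%N.
Proof.
move=> _ hl hw hr h1 h2.
set L := [:: lam1; [::]; two_part w1 w2; two_part r1 r2].
have HL : mcells L = _ := mcells_eq hl hw hr.
have n0 : (0 < size (mcells L))%N.
  by rewrite HL !size_cat /seg !size_map !size_iota; move: hw; clear; lia.
pose i0 := Ordinal n0.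
have Hk : forall k, (0 < k)%N -> ((k%:R)%R : F) != 0%R.
  by move=> k k0; rewrite (GRing.pcharf0P F).1 // -lt0n.
have Hch : ((2%:R)%R : F) != 0%R by apply: Hk.
have Hnz := final_nz HL hw hr h1 h2 i0 Hch Hk.
rewrite -lt0n /star_mult; apply: qdim_pos.
- by exists (f0 HL hw hr h1 h2 i0 F).
- move=> H; move: Hnz; rewrite H ?GRing.mulr0 ?eqxx // => i.
  exact: in_part_Vr.
- by move=> c c0; apply: star_id_scale.
- by apply/card_gt0P; exists 1%g.
Qed.
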